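(* $\mathcal{L}_{\mathsf{SAFA}}$ and $\mathcal{L}_{\mathsf{KRFA}}$ are incomparable: there is a data language accepted by some SAFA but by no $k$-register automaton (for any $k$), and there is a data language accepted by some $k$-register automaton but by no SAFA.
   Context: $D$ is a fixed countably infinite set of data values; for a finite alphabet $\Sigma$, data languages are subsets of $(\Sigma\times D)^*$. A set augmented finite automaton (SAFA) is a tuple $M=(Q,\Sigma\times D,q_0,F,H,\delta)$: $Q$ finite set of states, $q_0\in Q$ initial, $F\subseteq Q$ final, $H=\{h_1,\dots,h_m\}$ a finite collection of (names of) sets of data values, $\delta\subseteq Q\times\Sigma\times C\times OP\times Q$ with $C=\{p(h_i),\,!p(h_i)\}$, $OP=\{-\}\cup\{\mathsf{ins}(h_i)\}$. Configurations are $(q,\langle S_1,\dots,S_m\rangle)$, $S_i\subseteq D$ finite; initially state $q_0$ and all sets empty. On reading $(a,d)$, a transition $(q,a,\alpha,op,q')$ from the current state may be taken if $\alpha=p(h_i)$ and $d\in S_i$, or $\alpha=\,!p(h_i)$ and $d\notin S_i$; then the state becomes $q'$ and if $op=\mathsf{ins}(h_j)$, $d$ is added to $S_j$. A word is accepted if some run reads it entirely and ends in $F$. $\mathcal{L}_{\mathsf{SAFA}}$ is the class of data languages accepted by SAFA. A $k$-register automaton is a tuple $(Q,\Sigma,\delta,\tau_0,U,q_0,F)$ with finite state set $Q$, initial state $q_0$, final states $F\subseteq Q$, initial register assignment $\tau_0:\{1,\dots,k\}\to D\cup\{\bot\}$ (the non-$\bot$ values being pairwise distinct; $\bot$ means empty),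 a partial update function $U:Q\times\Sigma\to\{1,\dots,k\}$ and transition relation $\delta\subseteq Q\times\Sigma\times\{1,\dots,k\}\times Q$. Reading $(a,d)$ in state $q$: if $d$ equals the content of some register $i$, the automaton takes a transition $(q,a,i,q')\in\delta$ (halting without consuming if none exists); if $d$ is in no register, then if $U(q,a)$ is undefined it halts, otherwise $d$ is written into register $U(q,a)$ and a transition $(q,a,U(q,a),q')\in\delta$ is taken (halting if none). A word is accepted if it is entirely consumed and the automaton ends in $F$. $\mathcal{L}_{\mathsf{KRFA}}$ is the class of data languages accepted by $k$-register automata for some $k\geq 1$. *)

(* Defs.v *)
From mathcomp Require Import all_boot.
Set Implicit Arguments. Unset Strict Implicit. Unset Printing Implicit Defensive.

Definition D := nat.

(* conditions p(h_i) / !p(h_i), over the set names H = 'I_m *)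
Inductive safa_cond (m : nat) := Pin of 'I_m | NPin of 'I_m.

Record SAFA (Sigma : finType) := {
  safa_Q : finType;
  safa_m : nat;
  safa_q0 : safa_Q;
  safa_F : {set safa_Q};
  (* transition relation  delta ⊆ Q × Σ × C × OP × Q;
     the operation is  None = "-",  Some j = ins(h_j) *)
  safa_delta : safa_Q -> Sigma -> safa_cond safa_m -> option 'I_safa_m -> safa_Q -> Prop
}.

Definition safa_sat m (c : safa_cond m) (S : 'I_m -> seq D) (d : D) : Prop :=
  match c with
  | Pin i => d \in S i
  | NPin i => d \notin S i
  end.

Definition safa_upd m (op : option 'I_m) (S : 'I_m -> seq D) (d : D) : 'I_m -> seq D :=
  match op with
  | None => S
  | Some j => fun i => if i == j then d :: S i else S i
  end.

Fixpoint safa_acc Sigma (M : SAFA Sigma) (q : safa_Q M) (S : 'I_(safa_m M) -> seq D)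
    (w : seq (Sigma * D)) : Prop :=
  match w with
  | [::] => q \in @safa_F _ M
  | (a, d) :: w' =>
      exists (c : safa_cond (safa_m M)) (op : option 'I_(safa_m M)) (q' : safa_Q M),
        [/\ @safa_delta _ M q a c op q', safa_sat c S d & safa_acc q' (safa_upd op S d) w']
  end.

Definition safa_accepts Sigma (M : SAFA Sigma) (w : seq (Sigma * D)) : Prop :=
  @safa_acc _ M (safa_q0 M) (fun _ => [::]) w.

Definition in_L_SAFA (Sigma : finType) (L : seq (Sigma * D) -> Prop) : Prop :=
  exists M : SAFA Sigma, forall w, L w <-> safa_accepts M w.

Record KRA (Sigma : finType) (k : nat) := {
  kra_Q : finType;
  kra_delta : kra_Q -> Sigma -> 'I_k -> kra_Q -> Prop;
  kra_tau0 : 'I_k -> option D;            (* None = ⊥ *)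
  kra_tau0_inj : forall i j d, kra_tau0 i = Some d -> kra_tau0 j = Some d -> i = j;
  kra_U : kra_Q -> Sigma -> option 'I_k;
  kra_q0 : kra_Q;
  kra_F : {set kra_Q}
}.

Definition kra_write k (tau : 'I_k -> option D) (j : 'I_k) (d : D) : 'I_k -> option D :=
  fun i => if i == j then Some d else tau i.

Fixpoint kra_acc Sigma k (A : KRA Sigma k) (q : kra_Q A) (tau : 'I_k -> option D)
    (w : seq (Sigma * D)) : Prop :=
  match w with
  | [::] => q \in @kra_F _ _ A
  | (a, d) :: w' =>
      (exists i, tau i = Some d /\
         exists q', @kra_delta _ _ A q a i q' /\ kra_acc q' tau w')
      \/
      ((forall i, tau i <> Some d) /\
         exists j, @kra_U _ _ A q a = Some j /\
           exists q', @kra_delta _ _ A q a j q' /\ kra_acc q' (kra_write tau j d) w')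
  end.

Definition kra_accepts Sigma k (A : KRA Sigma k) (w : seq (Sigma * D)) : Prop :=
  @kra_acc _ _ A (kra_q0 A) (kra_tau0 A) w.

Definition in_L_KRFA (Sigma : finType) (L : seq (Sigma * D) -> Prop) : Prop :=
  exists k, 0 < k /\ exists A : KRA Sigma k, forall w, L w <-> kra_accepts A w.

(* Main.v *)
Require Import Defs.
From mathcomp Require Import all_boot.
Set Implicit Arguments. Unset Strict Implicit. Unset Printing Implicit Defensive.

Fixpoint pok (s : seq D) : bool :=
  match s with
  | [::] => true
  | [:: _] => false
  | x :: ((y :: s') as t) => (x == y) && pok s'
  end.

Fixpoint pairs (b n : nat) : seq (unit * D) :=
  match n with 0 => [::] | n'.+1 => (tt, b) :: (tt, b) :: pairs b.+1 n' end.

Lemma pok_pairs b n : pok (map snd (pairs b n)).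
Proof. by elim: n b => //= n IH b; rewrite eqxx IH. Qed.

Lemma mem_pairs b n v : v \in map snd (pairs b n) -> b <= v < b + n.
Proof.
elim: n b => //= n IH b; rewrite !in_cons => /orP[/eqP->|/orP[/eqP->|/IH]].
- by rewrite leqnn addnS ltnS leq_addr.
- by rewrite leqnn addnS ltnS leq_addr.
by rewrite addnS addSn => /andP[/ltnW -> ->].
Qed.

Lemma upd_neq m (op : option 'I_m) S d v i : v != d ->
  (v \in safa_upd op S d i) = (v \in S i).
Proof. by move=> H; case: op => [j|] //=; case: (i == j) => //; rewrite in_cons (negbTE H). Qed.

Lemma upd_sub m (op : option 'I_m) S d v i : v \in S i -> v \in safa_upd op S d i.
Proof. by case: op => [j|] //=; case: (i == j) => // H; rewrite in_cons H orbT. Qed.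

Lemma upd_inv m (op : option 'I_m) S d v i : v \in safa_upd op S d i -> (v == d) || (v \in S i).
Proof.
case: op => [j|] /= H; last by rewrite H orbT.
by move: H; case: (i == j) => [|->]; rewrite ?orbT // in_cons.
Qed.

Lemma upd_nil m (op : option 'I_m) S d i : safa_upd op S d i = [::] -> S i = [::].
Proof. by case: op => [j|] //=; case: (i == j). Qed.

Lemma safa_cong Sigma (M : SAFA Sigma) w : forall q S S',
  @safa_acc _ M q S w -> (forall i v, v \in map snd w -> (v \in S i) = (v \in S' i)) ->
  @safa_acc _ M q S' w.
Proof.
elim: w => [//|[a d] w IH] q S S' /= [c [op [q' [Hd Hs Ha]]]] Hag.
exists c, op, q'; split => //.
  by case: c {Hd} Hs => i /=; rewrite (Hag i d) // in_cons eqxx.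
apply: IH Ha _ => i v Hv.
clear Hd; case: op => [j|] /=; last by apply: Hag; rewrite in_cons Hv orbT.
by case: (i == j); rewrite ?in_cons Hag // in_cons Hv orbT.
Qed.

Lemma G (M : SAFA unit) n : forall q S b,
  @safa_acc _ M q S (pairs b n) -> (forall i v, v \in S i -> v < b) ->
  #|[set i | S i == [::]]| < n ->
  exists u, pok (map snd u) = false /\ @safa_acc _ M q S u.
Proof.
elim: n => [//|n IH] q S b /= [c1 [op1 [q1 [H1 s1 [c2 [op2 [q2 [H2 s2 Ha]]]]]]]] Hb Hc.
set S1 := safa_upd op1 S b in s2 Ha.
have S1b : forall i v, v \in S1 i -> v <= b.
  by move=> i v /upd_inv /orP[/eqP->//|/Hb/ltnW].
case: c2 H2 s2 => i H2 /= s2.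
- case: (boolP (has (fun y => y != b) (S1 i))) => [/hasP[y Hy yb]|Hn].
  + exists [:: (tt, b), (tt, y) & pairs b.+1 n]; split.
      by rewrite /= eq_sym (negbTE yb).
    exists c1, op1, q1; split => //; exists (Pin i), op2, q2; split => //.
    apply: safa_cong Ha _ => i' v /mem_pairs /andP[bv _].
    have yb' : y < b by rewrite ltn_neqAle yb (S1b i).
    have yv : y < v by apply: (leq_trans yb' (ltnW bv)).
    by rewrite !upd_neq // neq_ltn ?yv ?bv ?orbT.
  + have Si : S i = [::].
      case E: (S i) => [//|z s]; exfalso.
      have zS : z \in S1 i by apply: upd_sub; rewrite E mem_head.
      move/hasPn: Hn => /(_ z zS); rewrite negbK => /eqP zb.
      by have := Hb i z; rewrite E mem_head zb ltnn => /(_ isT).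
    set S2 := safa_upd op2 S1 b in Ha.
    have [u [Hu Hau]] : exists u, pok (map snd u) = false /\ @safa_acc _ M q2 S2 u.
      apply: IH Ha _ _.
        by move=> i' v /upd_inv /orP[/eqP->//|/S1b].
      have Hp : [set i | S2 i == [::]] \proper [set i | S i == [::]].
        apply/properP; split.
          by apply/subsetP => i'; rewrite !inE => /eqP /upd_nil /upd_nil ->.
        exists i; first by rewrite inE Si.
        rewrite inE; apply/eqP => E.
        by have := upd_sub op2 b s2; rewrite -/S2 E.
      by have := proper_card Hp; move: Hc; rewrite ltnS => Hc Hl; apply: leq_trans Hl Hc.
    exists [:: (tt, b), (tt, b) & u]; split; first by rewrite /= eqxx.
    exists c1, op1, q1; split => //; exists (Pin i), op2, q2; split => //.
- exists [:: (tt, b), (tt, b.+1 + n) & pairs b.+1 n]; split.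
    by rewrite /= eqn_leq (leqNgt _ b) ltnS leq_addr andbF.
  exists c1, op1, q1; split => //; exists (NPin i), op2, q2; split => //=.
    by apply/negP => /S1b; rewrite leqNgt ltnS leq_addr.
  apply: safa_cong Ha _ => i' v /mem_pairs /andP[bv vn].
  by rewrite !upd_neq // neq_ltn ?vn ?bv ?orbT.
Qed.

Fixpoint kra_reach Sigma k (A : KRA Sigma k) (q : kra_Q A) (tau : 'I_k -> option D)
    (w : seq (Sigma * D)) (q' : kra_Q A) (tau' : 'I_k -> option D) : Prop :=
  match w with
  | [::] => q' = q /\ tau' = tau
  | (a, d) :: w' =>
      (exists i, tau i = Some d /\
         exists q1, @kra_delta _ _ A q a i q1 /\ kra_reach q1 tau w' q' tau')
      \/
      ((forall i, tau i <> Some d) /\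
         exists j, @kra_U _ _ A q a = Some j /\
           exists q1, @kra_delta _ _ A q a j q1 /\ kra_reach q1 (kra_write tau j d) w' q' tau')
  end.

Lemma kra_split Sigma k (A : KRA Sigma k) w v : forall q tau,
  @kra_acc _ _ A q tau (w ++ v) -> exists q' tau', kra_reach q tau w q' tau' /\ kra_acc q' tau' v.
Proof.
elim: w => [|[a d] w IH] q tau /=; first by move=> H; exists q, tau.
case=> [[i [Hi [q1 [Hd /IH [q' [tau' [H1 H2]]]]]]]|[Hn [j [Hj [q1 [Hd /IH [q' [tau' [H1 H2]]]]]]]]].
  by exists q', tau'; split => //; left; exists i; split => //; exists q1.
by exists q', tau'; split => //; right; split => //; exists j; split => //; exists q1.
Qed.

Lemma kra_join Sigma k (A : KRA Sigma k) w v : forall q tau q' tau',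
  kra_reach q tau w q' tau' -> @kra_acc _ _ A q' tau' v -> kra_acc q tau (w ++ v).
Proof.
elim: w => [|[a d] w IH] q tau q' tau' /=; first by case=> -> ->.
case=> [[i [Hi [q1 [Hd H1]]]]|[Hn [j [Hj [q1 [Hd H1]]]]]] H2.
  by left; exists i; split => //; exists q1; split => //; apply: IH H1 H2.
by right; split => //; exists j; split => //; exists q1; split => //; apply: IH H1 H2.
Qed.

Lemma kra_range Sigma k (A : KRA Sigma k) w : forall q tau q' tau',
  @kra_reach _ _ A q tau w q' tau' -> forall i e, tau' i = Some e ->
  (exists j, tau j = Some e) \/ e \in map snd w.
Proof.
elim: w => [|[a d] w IH] q tau q' tau' /=; first by case=> _ -> i e H; left; exists i.
case=> [[i [Hi [q1 [Hd H1]]]]|[Hn [j [Hj [q1 [Hd H1]]]]]] i' e He.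
  case: (IH _ _ _ _ H1 i' e He) => [[j Hj]|Hw]; first by left; exists j.
  by right; rewrite in_cons Hw orbT.
case: (IH _ _ _ _ H1 i' e He) => [[j' Hj']|Hw]; last by right; rewrite in_cons Hw orbT.
move: Hj'; rewrite /kra_write; case: (j' == j) => [[<-]|H]; first by right; rewrite mem_head.
by left; exists j'.
Qed.

Definition L1 (w : seq (unit * D)) : Prop := uniq (map snd w).

Lemma not_KRFA_L1 : ~ in_L_KRFA L1.
Proof.
case=> k [k0 [A HA]].
set M := \max_(i < k) odflt 0 (kra_tau0 A i).
set d := M + k.+1.
set w := [seq (tt, v) | v <- iota 0 k.+1].
have mw : map snd w = iota 0 k.+1 by rewrite /w -map_comp map_id.
have dw : d \notin iota 0 k.+1 by rewrite mem_iota /= add0n /d ltnNge leq_addl.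
have : kra_accepts A (w ++ [:: (tt, d)]).
  by apply/HA; rewrite /L1 map_cat mw cats1 rcons_uniq dw iota_uniq.
case/kra_split => q' [tau' [Hr Ha]].
have dn : forall i, tau' i <> Some d.
  move=> i /(kra_range Hr) [[j Hj]|]; last by rewrite mw (negbTE dw).
  have := leq_bigmax (F := fun i => odflt 0 (kra_tau0 A i)) j.
  rewrite Hj /= -/M => Hle.
  by move: Hle; rewrite /d addnS ltnNge leq_addr.
set t := [seq odflt 0 (tau' i) | i <- enum 'I_k].
have : ~~ all (fun x => x \in t) (iota 0 k.+1).
  apply/negP => /allP Hs.
  have := uniq_leq_size (iota_uniq 0 k.+1) Hs.
  by rewrite size_iota /t size_map size_enum_ord ltnn.
case/allPn => x xs xt.
have xn : forall i, tau' i <> Some x.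
  move=> i Hi; move/negP: xt; apply; apply/mapP; exists i; first by rewrite mem_enum.
  by rewrite Hi.
have : kra_accepts A (w ++ [:: (tt, x)]).
  apply: kra_join Hr _.
  case: Ha => /= [[i [Hi _]]|[_ [j [Hj [q1 [Hd Hf]]]]]]; first by case: (dn i).
  by right; split => //; exists j; split => //; exists q1.
move/HA; rewrite /L1 map_cat mw cats1 rcons_uniq xs.
by [].
Qed.
Definition M1 : SAFA unit := {|
  safa_Q := unit; safa_m := 1; safa_q0 := tt; safa_F := setT;
  safa_delta := fun _ _ c op _ => c = NPin ord0 /\ op = Some ord0 |}.

Lemma M1_inv w : forall (S : 'I_1 -> seq D),
  @safa_acc _ M1 tt S w <-> uniq (map snd w) && all (fun d => d \notin S ord0) (map snd w).
Proof.
elim: w => [|[a d] w IH] S /=; first by rewrite in_setT.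
have E : forall s, all (fun x => x \notin d :: S ord0) s = (d \notin s) && all (fun x => x \notin S ord0) s.
  elim=> [//|x s /= ->]; rewrite !in_cons [d == x]eq_sym.
  by case: (x == d); case: (x \in S ord0); case: (d \in s).
split.
  case=> c [op [[] [[-> ->] /= Hs /(proj1 (IH _))]]].
  by rewrite eqxx E Hs => /andP[-> /andP[-> ->]].
case/andP=> /andP[dw uw] /andP[dS aw].
exists (NPin ord0), (Some ord0), tt; split => //.
apply/(proj2 (IH _)); rewrite /= ?eqxx.
by rewrite E dw uw aw.
Qed.

Lemma L1_SAFA : in_L_SAFA L1.
Proof.
exists M1 => w; rewrite /safa_accepts /L1.
have Ht : all (fun d => d \notin ([::] : seq D)) (map snd w) by apply/allP.
split => H.
  by apply/(proj2 (M1_inv w (fun _ => [::]))); rewrite H Ht.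
by move/(proj1 (M1_inv w (fun _ => [::]))): H => /andP[].
Qed.

Lemma tau0_none_inj k (i j : 'I_k) (d : D) : (fun _ : 'I_k => None) i = Some d -> (fun _ : 'I_k => None) j = Some d -> i = j.
Proof. by []. Qed.

Definition A2 : KRA unit 1 := {|
  kra_Q := bool;
  kra_delta := fun q _ _ q' => q' = ~~ q;
  kra_tau0 := fun _ => None;
  kra_tau0_inj := @tau0_none_inj 1;
  kra_U := fun q _ => if q then Some ord0 else None;
  kra_q0 := true;
  kra_F := [set true] |}.

Lemma A2_inv w :
  (forall tau, @kra_acc _ _ A2 true tau w <-> pok (map snd w)) /\
  (forall tau x, tau ord0 = Some x -> (@kra_acc _ _ A2 false tau w <-> pok (x :: map snd w))).
Proof.
elim: w => [|[a d] w [IH1 IH2]] /=; first by split => [tau|tau x _]; rewrite inE.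
split => [tau|tau x Hx].
  set tau1 := if tau ord0 == Some d then tau else kra_write tau ord0 d.
  have Ht1 : tau1 ord0 = Some d.
    by rewrite /tau1; case: eqP => // _; rewrite /kra_write eqxx.
  have [H1a H1b] := IH2 tau1 d Ht1.
  split.
    case=> [[i [Hi [q1 [-> H]]]]|[Hn [j [[<-] [q1 [-> H]]]]]]; apply: H1a.
      by rewrite (ord1 i) in Hi; rewrite /tau1 Hi eqxx.
    by rewrite /tau1; case: eqP => [/Hn//|_].
  move=> /H1b; rewrite /tau1; case: eqP => [Hd H|Hd H].
    by left; exists ord0; split => //; exists false.
  right; split; first by move=> i; rewrite (ord1 i).
  by exists ord0; split => //; exists false.
split.
  case=> [[i [Hi [q1 [-> /(proj1 (IH1 _)) H]]]]|[_ [j [//]]]].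
  by rewrite (ord1 i) Hx in Hi; case: Hi => ->; rewrite eqxx.
case/andP=> /eqP <- H; left; exists ord0; split => //; exists true; split => //.
exact/(proj2 (IH1 _)).
Qed.

Definition L2 (w : seq (unit * D)) : Prop := pok (map snd w).

Lemma L2_KRFA : in_L_KRFA L2.
Proof.
exists 1; split => //; exists A2 => w; rewrite /L2 /kra_accepts.
exact: iff_sym (proj1 (A2_inv w) _).
Qed.

Lemma not_SAFA_L2 : ~ in_L_SAFA L2.
Proof.
case=> M HM.
have : safa_accepts M (pairs 0 (safa_m M).+1) by apply/HM; apply: pok_pairs.
move/(@G M) => /(_ (fun i v H => H)) [].
  by rewrite ltnS (leq_trans (max_card _)) // card_ord.
move=> u [Hu /HM]; rewrite /L2 Hu.
by [].
Qed.

Theorem theorem15 :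
  (exists (Sigma : finType) (L : seq (Sigma * D) -> Prop),
      in_L_SAFA L /\ ~ in_L_KRFA L) /\
  (exists (Sigma : finType) (L : seq (Sigma * D) -> Prop),
      in_L_KRFA L /\ ~ in_L_SAFA L).
Proof.
split.
  by exists unit, L1; split; [exact: L1_SAFA | exact: not_KRFA_L1].
by exists unit, L2; split; [exact: L2_KRFA | exact: not_SAFA_L2].
Qed.
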